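(* Let $f:\mathbb{R}_+\to\mathbb{R}_+$ and $g:\mathbb{R}^2\to\mathbb{R}_+$ be non-negative, $g$ symmetric, and $\kappa(t,x,y)=1\wedge f(t)g(x,y)$. Let $W^{(1)},W^{(2)}$ be i.i.d. copies of a real random variable $W$. Assume (1) there are $\alpha_p>1$ and $t_1\ge0$ with $f(t)\le t^{-\alpha_p}$ for all $t>t_1$, and (2) there are $\beta_p>0$ and $t_2\ge0$ with $\mathbb{P}(g(W^{(1)},W^{(2)})>t)\le t^{-\beta_p}$ for all $t>t_2$. Then for every $\epsilon>0$ there is $t_0=t_0(\epsilon)>0$ such that for all $t>t_0$, $$\mathbb{E}\big[\kappa(t,W^{(1)},W^{(2)})\big]\le t^{-\min\{\alpha_p,\alpha_p\beta_p\}+\epsilon}.$$ *)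

(* Defs.v *)
From HB Require Import structures.
From mathcomp Require Import all_boot all_order all_algebra.
From mathcomp Require Import all_classical all_reals all_analysis.
Set Implicit Arguments. Unset Strict Implicit. Unset Printing Implicit Defensive.
Import Order.TTheory GRing.Theory Num.Theory.
Local Open Scope classical_set_scope.
Local Open Scope ring_scope.

Definition kappa {R : realType} (f : R -> R) (g : R -> R -> R) (t x y : R) : R :=
  Num.min 1 (f t * g x y).

Definition independent2 {d} {T : measurableType d} {R : realType}
  (P : probability T R) (X Y : T -> R) : Prop :=
  forall A B : set R, measurable A -> measurable B ->
    P (X @^-1` A `&` Y @^-1` B) = (P (X @^-1` A) * P (Y @^-1` B))%E.

Definition identically_distributed {d} {T : measurableType d} {R : realType}
  (P : probability T R) (X Y : T -> R) : Prop :=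
  forall A : set R, measurable A -> P (X @^-1` A) = P (Y @^-1` A).

(* Main.v *)
Require Import Defs.
From HB Require Import structures.
From mathcomp Require Import all_boot all_order all_algebra.
From mathcomp Require Import all_classical all_reals all_analysis.
From mathcomp Require Import measurable_realfun.
From mathcomp Require Import ring lra.
Import Order.TTheory GRing.Theory Num.Theory.
Local Open Scope classical_set_scope.
Local Open Scope ring_scope.

Lemma pw (R : realType) (c b x : R) (N : nat) : 0 <= c -> 0 <= b -> 0 <= x ->
  Num.min 1 (c * x) <= c + \sum_(k < N) c * b ^+ k.+1 * ((b ^+ k < x)%R)%:R + ((b ^+ N < x)%R)%:R.
Proof.
move=> c0 b0 x0.
have sum0 M : 0 <= \sum_(k < M) c * b ^+ k.+1 * ((b ^+ k < x)%R)%:R.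
  by apply: sumr_ge0 => k _; rewrite !mulr_ge0 ?exprn_ge0.
have m1 : Num.min 1 (c * x) <= 1 by rewrite ge_min lexx.
have mc : Num.min 1 (c * x) <= c * x by rewrite ge_min lexx orbT.
have ind0 (P : bool) : 0 <= P%:R :> R by case: P.
elim: N => [|N IH].
  rewrite big_ord0 expr0 addr0; case: ltP => [_|x1].
    by apply: (le_trans m1); rewrite lerDr.
  by apply: (le_trans mc); rewrite addr0 ler_piMr.
rewrite big_ord_recr /=.
have T1 : (true%:R : R) = 1 by [].
have F0 : (false%:R : R) = 0 by [].
case: (ltP (b ^+ N) x) => hN.
  case: (ltP (b ^+ N.+1) x) => hN1.
    apply: (le_trans m1); rewrite lerDr; apply: addr_ge0 => //.
    apply: addr_ge0 => //; first exact: sum0. rewrite T1 mulr1; apply: mulr_ge0 => //; exact: exprn_ge0.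
  apply: (le_trans mc); rewrite F0 T1 addr0 mulr1 addrCA.
  apply: ler_wpDl; first exact: sum0.
  apply: ler_wpDl; first exact: c0.
  by apply: ler_wpM2l.
apply: (le_trans IH).
have -> : (b ^+ N < x)%R = false by rewrite ltNge hN.
rewrite F0 mulr0 !addr0 -addrA lerD2l lerDl.
by case: (_ < _).
Qed.

Lemma ind_eq (T : Type) (R : realType) (G : T -> R) s w :
  \1_[set w | (s < G w)%R] w = ((s < G w)%R)%:R :> R.
Proof. rewrite indicE. have [H|H] := boolP (s < G w).
 by rewrite mem_set. by rewrite memNset //; apply/negP. Qed.

Lemma meas_lt d (T : measurableType d) (R : realType) (G : T -> R) s :
  measurable_fun setT G -> measurable [set w | (s < G w)%R].
Proof.
move=> mG; have := mG measurableT _ (measurable_itv `]s, +oo[).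
rewrite setTI; congr measurable; apply/seteqP; split => w /=;
  by rewrite in_itv /= andbT.
Qed.

Lemma int_bound d (T : measurableType d) (R : realType) (P : probability T R)
  (G : T -> R) (mG : measurable_fun setT G) (a b : R) (a0 : 0 <= a) (b0 : 0 <= b)
  (N : nat) (h : T -> R) (mh : measurable_fun setT h)
  (h0 : forall w, 0 <= h w) 
  (hle : forall w, h w <= a + \sum_(k < N) a * b ^+ k.+1 * \1_[set w | (b ^+ k < G w)%R] w
                      + \1_[set w | (b ^+ N < G w)%R] w) :
  (\int[P]_w (h w)%:E <= a%:E + \sum_(k < N) (a * b ^+ k.+1)%:E * P [set w | (b ^+ k < G w)%R]
      + P [set w | (b ^+ N < G w)%R])%E.
Proof.
pose E k := [set w | (b ^+ k < G w)%R].
have mE k : measurable (E k) by exact: meas_lt.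
have mI k : measurable_fun setT (fun w => ((\1_(E k) w : R)%:E)).
  by apply/measurable_EFinP; exact: measurable_indic.
have mS k : measurable_fun setT (fun w => ((a * b ^+ k.+1)%:E * (\1_(E k) w : R)%:E)%E).
  by apply/measurable_EFinP; apply: measurable_funM => //; exact: measurable_indic.
have S0 k w : (0 <= (a * b ^+ k.+1)%:E * (\1_(E k) w)%:E :> \bar R)%E.
  by rewrite -EFinM lee_fin mulr_ge0 ?mulr_ge0 ?exprn_ge0.
have I0 k w : (0 <= (\1_(E k) w)%:E :> \bar R)%E by rewrite lee_fin.
pose F w := (a%:E + \sum_(k < N) (a * b ^+ k.+1)%:E * (\1_(E k) w)%:E + (\1_(E N) w)%:E)%E.
apply: (@le_trans _ _ (\int[P]_w F w)%E).
  apply: ge0_le_integral => //.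
  - by move=> w _; rewrite lee_fin.
  - exact/measurable_EFinP.
  - apply: emeasurable_funD => //; apply: emeasurable_funD => //.
    exact: emeasurable_sum.
  - move=> w _; rewrite /F; under eq_bigr do rewrite -EFinM.
    rewrite sumEFin -!EFinD lee_fin; exact: hle.
rewrite /F ge0_integralD //; last 2 first.
  - by move=> w _; rewrite adde_ge0 // ?lee_fin // sume_ge0.
  - apply: emeasurable_funD => //; exact: emeasurable_sum.
rewrite ge0_integralD //; last 2 first.
  - by move=> w _; rewrite sume_ge0.
  - exact: emeasurable_sum.
rewrite integral_cst //.
match goal with |- context [ (a%:E * ?Y)%E ] => have -> : Y = 1%E by exact: probability_setT end.
rewrite mule1 ge0_integral_sum //.
rewrite integral_indic // setIT leeD2r // leeD2l //.
apply: lee_sum => k _; rewrite ge0_integralZl_EFin ?mulr_ge0 ?exprn_ge0 //.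
by rewrite integral_indic // setIT.
Qed.

Theorem lemma2p3 (R : realType) (d : measure_display) (T : measurableType d)
  (P : probability T R) (f : R -> R) (g : R -> R -> R) (W1 W2 : T -> R)
  (f_ge0 : forall t, 0 <= t -> 0 <= f t)
  (g_ge0 : forall x y, 0 <= g x y)
  (g_sym : forall x y, g x y = g y x)
  (g_meas : measurable_fun [set: R * R] (fun p : R * R => g p.1 p.2))
  (W1_meas : measurable_fun [set: T] W1)
  (W2_meas : measurable_fun [set: T] W2)
  (W_indep : independent2 P W1 W2)
  (W_id : identically_distributed P W1 W2)
  (alpha_p beta_p t1 t2 : R)
  (alpha_gt1 : 1 < alpha_p) (t1_ge0 : 0 <= t1)
  (hf : forall t, t1 < t -> f t <= t `^ (- alpha_p))
  (beta_gt0 : 0 < beta_p) (t2_ge0 : 0 <= t2)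
  (hg : forall t, t2 < t ->
     (P [set w | (t < g (W1 w) (W2 w))%R] <= (t `^ (- beta_p))%:E)%E) :
  forall eps : R, 0 < eps -> exists t0 : R, 0 < t0 /\
    forall t, t0 < t ->
      ('E_P[fun w => kappa f g t (W1 w) (W2 w)]
        <= (t `^ (- Num.min alpha_p (alpha_p * beta_p) + eps))%:E)%E.
Proof.
move=> eps eps0.
set m := Num.min alpha_p (alpha_p * beta_p).
have al0 : 0 < alpha_p by apply: lt_trans alpha_gt1.
have mle1 : m <= alpha_p by rewrite /m ge_min lexx.
have mle2 : m <= alpha_p * beta_p by rewrite /m ge_min lexx orbT.
pose N := (Num.truncn (2 * alpha_p / eps)).+1.
have NR : 2 * alpha_p / eps < N%:R := truncnS_gt _.
have N0 : 0 < N%:R :> R by rewrite ltr0n.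
pose dl := alpha_p / N%:R.
have dl0 : 0 < dl by rewrite divr_gt0.
have Ndl : N%:R * dl = alpha_p by rewrite /dl mulrC divfK // gt_eqF.
have dle : dl <= eps / 2.
  rewrite ltr_pdivrMr // in NR.
  rewrite /dl ler_pdivrMr //; lra.
pose t0 := Num.max (Num.max 1 t1) (Num.max ((t2 + 1) `^ (dl^-1)) ((N.+2)%:R `^ (2 / eps))).
exists t0; split.
  by apply: (lt_le_trans ltr01); rewrite /t0 !le_max lexx.
move=> t; rewrite /t0 !gt_max => /andP[/andP[t_gt1 t_gt1'] /andP[t_gtd t_gte]].
have t0' : 0 < t by apply: lt_trans t_gt1.
have t_ge1 : 1 <= t by apply: ltW.
have powle (x y : R) : x <= y -> t `^ x <= t `^ y by apply: ler_powR.
have tdl : t2 < t `^ dl.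
  apply: (lt_le_trans (_ : t2 < t2 + 1)); first lra.
  have -> : t2 + 1 = ((t2 + 1) `^ (dl^-1)) `^ dl.
    by rewrite -powRrM mulVf ?gt_eqF // powRr1 //; lra.
  apply: ge0_ler_powR; rewrite ?nnegrE ?powR_ge0 ?ltW //.
have tNe : (N.+2)%:R <= t `^ (eps / 2).
  have -> : (N.+2)%:R = ((N.+2)%:R `^ (2 / eps)) `^ (eps / 2) :> R.
    by rewrite -powRrM (_ : 2 / eps * (eps / 2) = 1) ?powRr1 //; field; rewrite gt_eqF.
  apply: ge0_ler_powR; rewrite ?nnegrE ?powR_ge0 ?ltW //; lra.
pose G w := g (W1 w) (W2 w).
have mG : measurable_fun setT G.
  exact: (measurableT_comp g_meas (measurable_fun_pair W1_meas W2_meas)).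
have G0 w : 0 <= G w by exact: g_ge0.
pose a := t `^ (- alpha_p).
pose b := t `^ dl.
have a0 : 0 <= a by exact: powR_ge0.
have b0 : 0 <= b by exact: powR_ge0.
have bk k : b ^+ k = t `^ (k%:R * dl).
  by rewrite /b -powR_mulrn ?powR_ge0 // -powRrM mulrC.
have ft0 : 0 <= f t by apply: f_ge0; apply: ltW.
have ftle : f t <= a by apply: hf.
have mh : measurable_fun setT (fun w => kappa f g t (W1 w) (W2 w)).
  rewrite /kappa; apply: measurable_minr; first exact: measurable_cst.
  by apply: measurable_funM => //; exact: measurable_cst.
have h0 w : 0 <= kappa f g t (W1 w) (W2 w).
  by rewrite /kappa le_min ler01 mulr_ge0.
have hle w : kappa f g t (W1 w) (W2 w) <= a + \sum_(k < N) a * b ^+ k.+1 * \1_[set w | (b ^+ k < G w)%R] w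
                      + \1_[set w | (b ^+ N < G w)%R] w.
  rewrite !ind_eq; under eq_bigr do rewrite ind_eq.
  apply: (le_trans _ (@pw _ a b (G w) N a0 b0 (G0 w))).
  rewrite /kappa le_min ge_min lexx /= ge_min orbC ler_wpM2r //.
have HI := @int_bound d T R P G mG a b a0 b0 N _ mh h0 hle.
rewrite expectation.unlock; apply: (le_trans HI).
have tne0 : t != 0 by rewrite gt_eqF.
have powD (x z : R) : t `^ (x + z) = t `^ x * t `^ z.
  by rewrite powRD // tne0 implybT.
pose y := t `^ (- m + dl).
have y0 : 0 <= y by exact: powR_ge0.
have ay : a <= y by apply: powle; lra.
have N1 : 1 <= N%:R :> R by rewrite ler1n.
have dla : dl <= alpha_p by rewrite -Ndl ler_peMl // ltW.
have tk k : (0 < k)%N -> t2 < b ^+ k.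
  move=> k0; apply: (lt_le_trans tdl); rewrite bk; apply: powle.
  by rewrite ler_peMl ?ler1n // ltW.
have PNle : (P [set w | (b ^+ N < G w)%R] <= y%:E)%E.
  apply: le_trans (hg _ (tk N isT)) _.
  rewrite bk Ndl -powRrM lee_fin; apply: powle; lra.
have Pk k : (k < N)%N -> ((a * b ^+ k.+1)%:E * P [set w | (b ^+ k < G w)%R] <= y%:E)%E.
  move=> kN.
  have mk : measurable [set w | (b ^+ k < G w)%R] by exact: meas_lt.
  have ab : a * b ^+ k.+1 = t `^ (- alpha_p + k.+1%:R * dl) by rewrite powD bk.
  have ab0 : (0 <= (a * b ^+ k.+1)%:E)%E by rewrite lee_fin mulr_ge0 ?exprn_ge0.
  case: k kN mk ab ab0 => [|k] kN mk ab ab0.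
    apply: le_trans (lee_wpmul2l ab0 (probability_le1 P mk)) _.
    rewrite mule1 lee_fin ab; apply: powle; lra.
  apply: le_trans (lee_wpmul2l ab0 (hg _ (tk k.+1 isT))) _.
  rewrite [b ^+ k.+1]bk -powRrM ab -EFinM -powD lee_fin; apply: powle.
  have u0 : 0 <= k.+1%:R * dl by rewrite mulr_ge0 ?ltW.
  have ua : k.+1%:R * dl <= alpha_p.
    by rewrite -Ndl ler_pM2r // ler_nat ltnW.
  rewrite [k.+2%:R]mulrSr mulrDl mul1r.
  set u := k.+1%:R * dl in u0 ua *.
  have [b1|b1] := lerP beta_p 1.
    have : 0 <= (alpha_p - u) * (1 - beta_p) by apply: mulr_ge0; lra.
    nra.
  have : 0 <= u * (beta_p - 1) by apply: mulr_ge0; lra.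
  nra.
apply: (@le_trans _ _ ((y + y *+ N) + y)%:E).
  rewrite !EFinD; apply: leeD => //; apply: leeD; first by rewrite lee_fin.
  have -> : (y *+ N)%:E = (\sum_(k < N) y%:E)%E by rewrite sumEFin sumr_const card_ord.
  by apply: lee_sum => k _; exact: Pk.
rewrite lee_fin.
have -> : y + y *+ N + y = (N.+2)%:R * y.
  by rewrite -mulr_natl -[N.+2]addn2 natrD mulrDl; lra.
have -> : - m + eps = eps / 2 + (- m + eps / 2) by lra.
rewrite powD; apply: ler_pM => //.
by apply: powle; lra.
Qed.
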